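(* Let $A \in \mathbb{C}^{n \times n}$, and fix $A^-\in A\{1\}$ and $A^{GD}\in A\{GD\}$. Let $A^{GD1}=A^{GD}AA^{-}$. Then: (i) $A^{GD1}$ satisfies $AA^{GD1}A=A$ and $A^{GD1}AA^{GD1}=A^{GD1}$; (ii) $A^mA^{GD1} =A^mA^{-}$ and $A^{GD1}A^m = A^{GD}A^m$ for every positive integer $m$; (iii) $AA^{GD1}=P_{R(A),N(AA^{-})}$; (iv) $A^{GD1}A=P_{R(A^{GD}A),N(A)}$.
   Context: For $A\in\mathbb{C}^{n\times n}$, the index $ind(A)$ is the smallest nonnegative integer $k$ with $\mathrm{rank}(A^k)=\mathrm{rank}(A^{k+1})$. $A\{1\}$ denotes the set of inner inverses of $A$, i.e. matrices $X$ with $AXA=A$. With $k=ind(A)$, $A\{GD\}$ denotes the set of G-Drazin inverses of $A$, i.e. matrices $X\in\mathbb{C}^{n\times n}$ with $AXA=A$, $XA^{k+1}=A^k$ and $A^{k+1}X=A^k$. $R(\cdot)$ and $N(\cdot)$ denote range and null space, and $P_{S,T}$ denotes the (oblique) projector onto the subspace $S$ along the subspace $T$. *)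

(* Defs.v *)
(* Complex matrices: C is an arbitrary numClosedFieldType
   (the complex numbers are an instance). Column-vector conventions. *)
From HB Require Import structures.
From mathcomp Require Import all_boot all_order all_algebra.
Set Implicit Arguments. Unset Strict Implicit. Unset Printing Implicit Defensive.
Import Order.TTheory GRing.Theory Num.Theory.
Local Open Scope ring_scope.

Section Defs.
Variables (C : numClosedFieldType) (n : nat).

(* ind(A): smallest k >= 0 with rank(A^k) = rank(A^(k+1)); such k <= n always
   exists, so searching in 0..n is exhaustive. *)
Definition ind (A : 'M[C]_n) : nat :=
  find (fun k => \rank (A ^+ k) == \rank (A ^+ k.+1)) (iota 0 n.+1).

Definition inner_inverse (A X : 'M[C]_n) : Prop := A *m X *m A = A.

Definition GDrazin_inverse (A X : 'M[C]_n) : Prop :=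
  let k := ind A in
  [/\ A *m X *m A = A, X *m A ^+ k.+1 = A ^+ k & A ^+ k.+1 *m X = A ^+ k].

Definition range (M : 'M[C]_n) (v : 'cV[C]_n) : Prop := exists w : 'cV[C]_n, v = M *m w.
Definition nullspace (M : 'M[C]_n) (v : 'cV[C]_n) : Prop := M *m v = 0.

Definition is_projector (X : 'M[C]_n) (S T : 'cV[C]_n -> Prop) : Prop :=
  [/\ (forall v, S v -> T v -> v = 0),
      (forall v, exists s t, [/\ S s, T t & v = s + t]),
      (forall v, S v -> X *m v = v) &
      (forall v, T v -> X *m v = 0)].
End Defs.

(* Main.v *)
Require Import Defs.
From HB Require Import structures.
From mathcomp Require Import all_boot all_order all_algebra.
Import GRing.Theory.
Local Open Scope ring_scope.

Theorem theorem2p3 (C : numClosedFieldType) (n : nat) (A Am Agd : 'M[C]_n) :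
  inner_inverse A Am -> GDrazin_inverse A Agd ->
  let AGD1 := Agd *m A *m Am in
  [/\ (A *m AGD1 *m A = A /\ AGD1 *m A *m AGD1 = AGD1),
      (forall m : nat, (0 < m)%N ->
         A ^+ m *m AGD1 = A ^+ m *m Am /\ AGD1 *m A ^+ m = Agd *m A ^+ m),
      is_projector (A *m AGD1) (range A) (nullspace (A *m Am)) &
      is_projector (AGD1 *m A) (range (Agd *m A)) (nullspace A)].
Proof.
rewrite /inner_inverse => HM [HG _ _] /=.
set X := Agd *m A *m Am.
have HX1 : A *m X = A *m Am by rewrite /X !mulmxA HG.
have HX2 : X *m A = Agd *m A by rewrite /X -!mulmxA (mulmxA A Am A) HM.
have HAM : A *m Am *m (A *m Am) = A *m Am by rewrite mulmxA HM.
have HGA : Agd *m A *m (Agd *m A) = Agd *m A by rewrite -mulmxA (mulmxA A) HG.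
split.
- split; first by rewrite HX1 HM.
  by rewrite HX2 /X mulmxA HGA.
- move=> m Hm; case: m Hm => // m _; split.
    by rewrite exprSr -!mulmxE -!mulmxA HX1.
  rewrite exprS -!mulmxE !mulmxA HX2.
  done.
- split.
  + move=> v [w ->] Hv; rewrite /nullspace mulmxA HM in Hv.
    by rewrite Hv.
  + move=> v; exists (A *m Am *m v), (v - A *m Am *m v); split.
    * by exists (Am *m v); rewrite mulmxA.
    * by rewrite /nullspace mulmxBr mulmxA HAM subrr.
    * by rewrite addrC subrK.
  + move=> v [w ->]; by rewrite HX1 !mulmxA HM.
  + move=> v Hv; by rewrite HX1.
- split.
  + move=> v [w ->] Hv; rewrite /nullspace !mulmxA HG in Hv.
    by rewrite -mulmxA Hv mulmx0.
  + move=> v; exists (Agd *m A *m v), (v - Agd *m A *m v); split.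
    * by exists v.
    * by rewrite /nullspace mulmxBr !mulmxA HG subrr.
    * by rewrite addrC subrK.
  + move=> v [w ->]; by rewrite HX2 mulmxA HGA.
  + move=> v Hv; by rewrite HX2 -mulmxA Hv mulmx0.
Qed.
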